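(* Let $\gamma\in\{\tfrac12,1,\dots\}$ and $j\in\{-\tfrac12,0,\tfrac12,\dots\}$ with $j>\gamma-1$. For every $M\in\{j+1-\gamma,j+2-\gamma,\dots\}$ let $V_M\subseteq F_\gamma\otimes D^+_j$ be the span of $|\gamma,\mu\rangle\otimes|j,M-\mu\rangle$, $\mu\in\{-\gamma,\dots,\min(\gamma,M-j-1)\}$. Then the restriction $Q_M$ of $Q$ to $V_M$ is diagonalisable with pairwise distinct eigenvalues $-(j+\mu)(j+\mu+1)$, $\mu\in\{-\gamma,\dots,\min(\gamma,M-j-1)\}$. Consequently $Q$ is diagonalisable on $F_\gamma\otimes D^+_j$ (the latter has a basis of $Q$-eigenvectors).
   Context: Let $\mathfrak{spin}(2,1)_{\mathbb C}$ have basis $J_0,J_+,J_-$ with $[J_0,J_\pm]=\pm J_\pm$, $[J_+,J_-]=-2J_0$, and Casimir $Q=-J_0(J_0-1)+J_+J_-$. Set $\Gamma_\pm(j,m)=\mathrm i\sqrt{j\mp m}\,\sqrt{j\pm m+1}$. A module with basis $\{|j,m\rangle\}$ has action $J_0|j,m\rangle=m|j,m\rangle$, $J_\pm|j,m\rangle=\Gamma_\pm(j,m)|j,m\pm1\rangle$. The positive discrete series module $D^+_j$ has basis $|j,m\rangle$, $m\in\{j+1,j+2,\dots\}$; the finite-dimensional module $F_\gamma$ has basis $|\gamma,\mu\rangle$, $\mu\in\{-\gamma,\dots,\gamma\}$. On a (algebraic) tensor product the generators act as $J_0\otimes1+1\otimes J_0$, $J_\pm\otimes1+1\otimes J_\pm$;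 the $V_M$ are the $J_0$-eigenspaces and are $Q$-invariant. *)

(* Defs.v *)
(* Complex scalars: algC (algebraic complex numbers);
   half-integer labels j, m, mu, M are rationals. *)
From HB Require Import structures.
From mathcomp Require Import all_boot all_order all_algebra all_field.
Set Implicit Arguments. Unset Strict Implicit. Unset Printing Implicit Defensive.
Import Order.TTheory GRing.Theory Num.Theory.
Local Open Scope ring_scope.

(* Coefficient vectors of a module with basis |l,m>, m : rat
   (v m = coefficient of |l,m>), and of the tensor product
   (w mu m = coefficient of |gamma,mu> (x) |j,m>). *)
Definition vec := rat -> algC.
Definition tvec := rat -> rat -> algC.

Definition Gp (l m : rat) : algC :=
  'i * sqrtC (ratr (l - m)) * sqrtC (ratr (l + m + 1)).
Definition Gm (l m : rat) : algC :=
  'i * sqrtC (ratr (l + m)) * sqrtC (ratr (l - m + 1)).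

Definition Fbas (gam mu : rat) : bool :=
  (- gam <= mu <= gam) && ((mu + gam) \is a Num.int).
Definition Dbas (j m : rat) : bool :=
  (j + 1 <= m) && ((m - j) \is a Num.int).

(* Action of J0, J+, J- on a module with label l and basis index set B,
   in coefficient form: J0|l,m> = m|l,m>, J+-|l,m> = Gamma+-(l,m)|l,m+-1>. *)
Definition opJ0 (B : pred rat) (v : vec) : vec :=
  fun m => if B m then ratr m * v m else 0.
Definition opJp (l : rat) (B : pred rat) (v : vec) : vec :=
  fun m => if B m && B (m - 1) then Gp l (m - 1) * v (m - 1) else 0.
Definition opJm (l : rat) (B : pred rat) (v : vec) : vec :=
  fun m => if B m && B (m + 1) then Gm l (m + 1) * v (m + 1) else 0.

(* A (x) 1 and 1 (x) A on the tensor product *)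
Definition lft (A : vec -> vec) (w : tvec) : tvec :=
  fun mu m => A (fun mu' => w mu' m) mu.
Definition rgt (A : vec -> vec) (w : tvec) : tvec :=
  fun mu m => A (w mu) m.
Definition addop (A B : tvec -> tvec) (w : tvec) : tvec :=
  fun mu m => A w mu m + B w mu m.

Definition TJ0 (gam j : rat) := addop (lft (opJ0 (Fbas gam))) (rgt (opJ0 (Dbas j))).
Definition TJp (gam j : rat) := addop (lft (opJp gam (Fbas gam))) (rgt (opJp j (Dbas j))).
Definition TJm (gam j : rat) := addop (lft (opJm gam (Fbas gam))) (rgt (opJm j (Dbas j))).

Definition TQ (gam j : rat) (w : tvec) : tvec :=
  fun mu m => - TJ0 gam j (fun a b => TJ0 gam j w a b - w a b) mu m
              + TJp gam j (TJm gam j w) mu m.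

Definition tzero : tvec := fun _ _ => 0.
Definition tscale (c : algC) (w : tvec) : tvec := fun mu m => c * w mu m.

(* elements of the algebraic tensor product: finitely supported,
   supported on the basis indices *)
Definition in_tensor (gam j : rat) (w : tvec) : Prop :=
  (forall mu m, w mu m != 0 -> Fbas gam mu && Dbas j m) /\
  exists s : seq (rat * rat), forall mu m, w mu m != 0 -> (mu, m) \in s.

Definition ebas (mu0 m0 : rat) : tvec :=
  fun mu m => if (mu == mu0) && (m == m0) then 1 else 0.

Definition lincomb (I : Type) (s : seq I) (c : I -> algC) (f : I -> tvec) : tvec :=
  fun mu m => \sum_(i <- s) c i * f i mu m.

Definition halfq (g : nat) : rat := g%:R / 2.

Definition VM_idx (g : nat) (j M : rat) : seq rat :=
  [seq mu <- [seq - halfq g + k%:R | k <- iota 0 g.+1] | mu <= M - j - 1].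

Definition in_VM (g : nat) (j M : rat) (w : tvec) : Prop :=
  exists c : rat -> algC, w = lincomb (VM_idx g j M) c (fun mu => ebas mu (M - mu)).

Definition lam (j mu : rat) : algC := - ratr ((j + mu) * (j + mu + 1)).

Definition validM (g : nat) (j M : rat) : bool := (M - (j + 1 - halfq g)) \is a Num.nat.

(* Main.v *)
Require Import Defs.
From HB Require Import structures.
From mathcomp Require Import all_boot all_order all_algebra all_field.
From mathcomp Require Import ring lra.
From Stdlib Require Import FunctionalExtensionality.
Import Order.TTheory GRing.Theory Num.Theory.
Local Open Scope ring_scope.

Lemma funext2 (w1 w2 : tvec) : (forall a b, w1 a b = w2 a b) -> w1 = w2.
Proof.
move=> H; apply: functional_extensionality => a.
by apply: functional_extensionality => b.
Qed.

Fact tadd_key : unit. Proof. exact: tt. Qed.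
Definition tadd : tvec -> tvec -> tvec :=
  locked_with tadd_key (fun (w1 w2 : tvec) (a b : rat) => w1 a b + w2 a b).
Canonical tadd_unlockable := [unlockable fun tadd].
Lemma taddE w1 w2 a b : tadd w1 w2 a b = w1 a b + w2 a b. Proof. by rewrite unlock. Qed.
Lemma tscaleE c w a b : tscale c w a b = c * w a b. Proof. by []. Qed.

Lemma opJ0E B v m : opJ0 B v m = (if B m then ratr m else 0) * v m.
Proof. by rewrite /opJ0; case: (B m); rewrite ?mul0r. Qed.
Lemma opJpE l B v m :
  opJp l B v m = (if B m && B (m - 1) then Gp l (m - 1) else 0) * v (m - 1).
Proof. by rewrite /opJp; case: (_ && _); rewrite ?mul0r. Qed.
Lemma opJmE l B v m :
  opJm l B v m = (if B m && B (m + 1) then Gm l (m + 1) else 0) * v (m + 1).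
Proof. by rewrite /opJm; case: (_ && _); rewrite ?mul0r. Qed.

Lemma lftE A w a b : lft A w a b = A (fun a' => w a' b) a. Proof. by []. Qed.
Lemma rgtE A w a b : rgt A w a b = A (w a) b. Proof. by []. Qed.
Lemma addopE A B w a b : addop A B w a b = A w a b + B w a b. Proof. by []. Qed.

Ltac unf := rewrite /TJ0 /TJp /TJm; repeat progress (rewrite ?addopE ?lftE ?rgtE ?opJ0E ?opJpE ?opJmE
   ?taddE ?tscaleE; cbv beta).


Lemma Z_add gam j w1 w2 : TJ0 gam j (tadd w1 w2) = tadd (TJ0 gam j w1) (TJ0 gam j w2).
Proof. apply: funext2 => a b; unf; ring. Qed.
Lemma Z_scale gam j c w : TJ0 gam j (tscale c w) = tscale c (TJ0 gam j w).
Proof. apply: funext2 => a b; unf; ring. Qed.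
Lemma P_add gam j w1 w2 : TJp gam j (tadd w1 w2) = tadd (TJp gam j w1) (TJp gam j w2).
Proof. apply: funext2 => a b; unf; ring. Qed.
Lemma P_scale gam j c w : TJp gam j (tscale c w) = tscale c (TJp gam j w).
Proof. apply: funext2 => a b; unf; ring. Qed.
Lemma N_add gam j w1 w2 : TJm gam j (tadd w1 w2) = tadd (TJm gam j w1) (TJm gam j w2).
Proof. apply: funext2 => a b; unf; ring. Qed.
Lemma N_scale gam j c w : TJm gam j (tscale c w) = tscale c (TJm gam j w).
Proof. apply: funext2 => a b; unf; ring. Qed.

Lemma TQE gam j w : TQ gam j w = tadd (tscale (-1) (TJ0 gam j (tadd (TJ0 gam j w) (tscale (-1) w))))
   (TJp gam j (TJm gam j w)).
Proof.
apply: funext2 => a b; rewrite /TQ taddE tscaleE mulN1r.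
congr (- TJ0 gam j _ a b + _).
by apply: funext2 => x y; rewrite taddE tscaleE mulN1r.
Qed.

Lemma R1 gam j w : TJ0 gam j (TJp gam j w) = tadd (TJp gam j (TJ0 gam j w)) (TJp gam j w).
Proof.
apply: funext2 => a b; unf; rewrite ?subrK ?addrK.
case: (Fbas gam a); case: (Fbas gam (a - 1)); case: (Dbas j b); case: (Dbas j (b - 1));
 rewrite /= ?rmorphB ?rmorph1; ring.
Qed.


Lemma GpGm l m : Gp l (m - 1) * Gm l m = - ratr ((l - m + 1) * (l + m)).
Proof.
rewrite /Gp /Gm.
have -> : l - (m - 1) = l - m + 1 by ring.
have -> : l + (m - 1) + 1 = l + m by ring.
set s1 := sqrtC _; set s2 := sqrtC _.
have -> : 'i * s1 * s2 * ('i * s2 * s1) = 'i ^+ 2 * s1 ^+ 2 * s2 ^+ 2 by ring.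
by rewrite sqrCi !sqrtCK rmorphM; ring.
Qed.

Lemma GmGp l m : Gm l (m + 1) * Gp l m = - ratr ((l + m + 1) * (l - m)).
Proof.
rewrite /Gp /Gm.
have -> : l + (m + 1) = l + m + 1 by ring.
have -> : l - (m + 1) + 1 = l - m by ring.
set s1 := sqrtC _; set s2 := sqrtC _.
have -> : 'i * s1 * s2 * ('i * s2 * s1) = 'i ^+ 2 * s1 ^+ 2 * s2 ^+ 2 by ring.
by rewrite sqrCi !sqrtCK rmorphM; ring.
Qed.

Lemma LF1 l (B : pred rat) x : (B x -> ~~ B (x - 1) -> (l - x + 1) * (l + x) = 0) ->
  (if B x && B (x - 1) then Gp l (x - 1) else 0) * (if B (x - 1) && B x then Gm l x else 0)
  = if B x then - ratr ((l - x + 1) * (l + x)) else 0.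
Proof.
case: (B x); case: (B (x - 1)) => //= H; rewrite ?mul0r ?mulr0 ?GpGm //.
by rewrite H // rmorph0 oppr0.
Qed.

Lemma LF2 l (B : pred rat) x : (B x -> ~~ B (x + 1) -> (l + x + 1) * (l - x) = 0) ->
  (if B x && B (x + 1) then Gm l (x + 1) else 0) * (if B (x + 1) && B x then Gp l x else 0)
  = if B x then - ratr ((l + x + 1) * (l - x)) else 0.
Proof.
case: (B x); case: (B (x + 1)) => //= H; rewrite ?mul0r ?mulr0 ?GmGp //.
by rewrite H // rmorph0 oppr0.
Qed.

Lemma halfq2 g : halfq g + halfq g = g%:R.
Proof. rewrite /halfq; field; by []. Qed.

Lemma int01 (x : rat) : x \is a Num.int -> 0 <= x -> x < 1 -> x = 0.
Proof.
move=> xi x0; have /natrP [n ->] : x \is a Num.nat by rewrite natrEint xi.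
by case: n => // n; rewrite ltrn1.
Qed.

Lemma FbL g a : Fbas (halfq g) a -> ~~ Fbas (halfq g) (a - 1) -> halfq g + a = 0.
Proof.
rewrite /Fbas => /andP [/andP [h1 h2] hi] hn; apply: int01; first by rewrite addrC.
  lra.
rewrite ltNge; apply/negP => h; move/negP: hn; apply.
have -> : a - 1 + halfq g = (a + halfq g) - 1 by ring.
rewrite rpredB // andbT; apply/andP; split; lra.
Qed.

Lemma FbR g a : Fbas (halfq g) a -> ~~ Fbas (halfq g) (a + 1) -> halfq g - a = 0.
Proof.
rewrite /Fbas => /andP [/andP [h1 h2] hi] hn; apply: int01.
- have -> : halfq g - a = g%:R - (a + halfq g) by rewrite -halfq2; ring.
  by rewrite rpredB // natr_int.
- lra.
rewrite ltNge; apply/negP => h; move/negP: hn; apply.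
have -> : a + 1 + halfq g = (a + halfq g) + 1 by ring.
rewrite rpredD // andbT; apply/andP; split; lra.
Qed.

Lemma DbL j b : Dbas j b -> ~~ Dbas j (b - 1) -> j - b + 1 = 0.
Proof.
rewrite /Dbas => /andP [h1 hi] hn.
suff : b - j - 1 = 0 by move=> h; rewrite -oppr0 -h; ring.
apply: int01; first by rewrite rpredB.
  lra.
rewrite ltNge; apply/negP => h; move/negP: hn; apply.
have -> : b - 1 - j = (b - j) - 1 by ring.
rewrite rpredB // andbT; lra.
Qed.

Lemma DbR j b : Dbas j b -> Dbas j (b + 1).
Proof.
rewrite /Dbas => /andP [h1 hi]; have -> : b + 1 - j = (b - j) + 1 by ring.
rewrite rpredD // andbT; lra.
Qed.

Lemma R2 g j w : TJp (halfq g) j (TJm (halfq g) j w) =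
   tadd (TJm (halfq g) j (TJp (halfq g) j w)) (tscale (-2) (TJ0 (halfq g) j w)).
Proof.
apply: funext2 => a b; unf; rewrite ?subrK ?addrK !mulrDr !mulrA.
rewrite LF1; last by move=> h1 h2; rewrite (FbL _ _ h1 h2) mulr0.
rewrite LF1; last by move=> h1 h2; rewrite (DbL _ _ h1 h2) mul0r.
rewrite LF2; last by move=> h1 h2; rewrite (FbR _ _ h1 h2) mulr0.
rewrite LF2; last by move=> h1 h2; rewrite DbR in h2.
case: (Fbas (halfq g) a); case: (Fbas (halfq g) (a - 1)); case: (Fbas (halfq g) (a + 1));
case: (Dbas j b); case: (Dbas j (b - 1)); case: (Dbas j (b + 1));
 rewrite /= ?rmorphM ?rmorphB ?rmorphD ?rmorph1; ring.
Qed.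

Lemma R2' g j w : TJm (halfq g) j (TJp (halfq g) j w) =
   tadd (TJp (halfq g) j (TJm (halfq g) j w)) (tscale 2 (TJ0 (halfq g) j w)).
Proof.
apply: funext2 => a b; have := f_equal (fun f => f a b) (R2 g j w).
rewrite /= !taddE !tscaleE => ->; ring.
Qed.

Lemma QP g j w : TQ (halfq g) j (TJp (halfq g) j w) = TJp (halfq g) j (TQ (halfq g) j w).
Proof.
rewrite !TQE R1 R2'.
rewrite ?(Z_add, Z_scale, P_add, P_scale, N_add, N_scale, R1).
apply: funext2 => a b; rewrite !(taddE, tscaleE); ring.
Qed.

Lemma Q_add gam j w1 w2 : TQ gam j (tadd w1 w2) = tadd (TQ gam j w1) (TQ gam j w2).
Proof.
rewrite !TQE ?(Z_add, Z_scale, P_add, P_scale, N_add, N_scale).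
apply: funext2 => a b; rewrite !(taddE, tscaleE); ring.
Qed.

Lemma Q_scale gam j c w : TQ gam j (tscale c w) = tscale c (TQ gam j w).
Proof.
rewrite !TQE ?(Z_add, Z_scale, P_add, P_scale, N_add, N_scale).
apply: funext2 => a b; rewrite !(taddE, tscaleE); ring.
Qed.

Lemma tscale0 w : tscale 0 w = tzero.
Proof. by apply: funext2 => a b; rewrite tscaleE mul0r. Qed.

Lemma Q_zero gam j : TQ gam j tzero = tzero.
Proof. by rewrite -{1}(tscale0 tzero) Q_scale tscale0. Qed.
Lemma P_zero gam j : TJp gam j tzero = tzero.
Proof. by rewrite -{1}(tscale0 tzero) P_scale tscale0. Qed.

Lemma FbasP g a : reflect (exists2 k, (k <= g)%N & a = - halfq g + k%:R) (Fbas (halfq g) a).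
Proof.
have h2 := halfq2 g.
apply: (iffP idP).
  rewrite /Fbas => /andP [/andP [h1 h3] hi].
  have /natrP [k hk] : a + halfq g \is a Num.nat by rewrite natrEint hi /=; lra.
  exists k; last by rewrite -hk; ring.
  by rewrite -(ler_nat rat) -hk -h2; lra.
move=> [k hk ->]; rewrite /Fbas.
have -> : - halfq g + k%:R + halfq g = k%:R by ring.
rewrite natr_int andbT.
have hk' : (k%:R <= g%:R :> rat) by rewrite ler_nat.
have hk0 : (0 <= k%:R :> rat) by rewrite ler0n.
apply/andP; split; lra.
Qed.

Lemma mem_VM g j M a : (a \in VM_idx g j M) = Fbas (halfq g) a && (a <= M - j - 1).
Proof.
rewrite /VM_idx mem_filter andbC; congr (_ && _).
apply/mapP/FbasP.
  by move=> [k]; rewrite mem_iota add0n ltnS => hk ->; exists k.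
by move=> [k hk ->]; exists k => //; rewrite mem_iota add0n ltnS.
Qed.

Lemma uniq_VM g j M : uniq (VM_idx g j M).
Proof.
rewrite /VM_idx filter_uniq // map_inj_uniq ?iota_uniq //.
by move=> x y /addrI /eqP; rewrite eqr_nat => /eqP.
Qed.

Definition suppV g j M (w : tvec) :=
  forall a b, w a b != 0 -> (a \in VM_idx g j M) && (b == M - a).

Lemma inVM_supp g j M w : in_VM g j M w -> suppV g j M w.
Proof.
move=> [c ->] a b; rewrite /lincomb; apply: contraNT => H.
rewrite big1_seq // => i /andP [_ hi]; rewrite /ebas.
case: eqP => [ea|]; last by rewrite mulr0.
case: eqP => [eb|]; last by rewrite mulr0.
by move: H; rewrite ea eb hi eqxx.
Qed.

Lemma supp_inVM g j M w : suppV g j M w -> in_VM g j M w.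
Proof.
move=> H; exists (fun a => w a (M - a)); apply: funext2 => a b; rewrite /lincomb.
have U := uniq_VM g j M.
case: (boolP ((a \in VM_idx g j M) && (b == M - a))) => [/andP [ha /eqP hb] | hn].
  rewrite (big_rem a) //= /ebas hb !eqxx /= mulr1 big1_seq ?addr0 //.
  move=> i /andP [_ hi]; case: eqP => [ei|]; last by rewrite mulr0.
  by move: hi; rewrite -ei mem_rem_uniqF.
have -> : w a b = 0 by apply/eqP; apply: contraNT hn; exact: H.
rewrite big1_seq // => i /andP [_ hi]; rewrite /ebas.
case: eqP => [ea|]; last by rewrite mulr0.
case: eqP => [eb|]; last by rewrite mulr0.
by move: hn; rewrite ea eb hi eqxx.
Qed.

Lemma sqrt_ratr_neq0 (x : rat) : x != 0 -> sqrtC (ratr x : algC) != 0.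
Proof. by rewrite sqrtC_eq0 fmorph_eq0. Qed.

Lemma Gm_neq0 l m : l + m != 0 -> l - m + 1 != 0 -> Gm l m != 0.
Proof. by move=> h1 h2; rewrite /Gm !mulf_neq0 ?neq0Ci ?sqrt_ratr_neq0. Qed.
Lemma Gp_neq0 l m : l - m != 0 -> l + m + 1 != 0 -> Gp l m != 0.
Proof. by move=> h1 h2; rewrite /Gp !mulf_neq0 ?neq0Ci ?sqrt_ratr_neq0. Qed.

Fixpoint cfk (g : nat) (j Mp : rat) (k : nat) : algC :=
  match k with
  | 0 => 1
  | k'.+1 => - Gm j (Mp - (- halfq g + k'%:R)) / Gm (halfq g) (- halfq g + k'%:R + 1)
             * cfk g j Mp k'
  end.

Definition w0 g j Mp : tvec := fun a b =>
  if (a \in VM_idx g j Mp) && (b == Mp - a) then cfk g j Mp (Num.truncn (a + halfq g)) else 0.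

Lemma w0_supp g j Mp : suppV g j Mp (w0 g j Mp).
Proof. by move=> a b; rewrite /w0; case: ifP => //; rewrite eqxx. Qed.

Lemma truncn_grid g k : Num.truncn (- halfq g + k%:R + halfq g) = k.
Proof. by rewrite addrAC addNr add0r natrK. Qed.

Lemma w0_N g j mu : Fbas (halfq g) mu ->
  TJm (halfq g) j (w0 g j (j + mu + 1)) = tzero.
Proof.
move=> hmu; set Mp := j + mu + 1.
have hmu' := hmu; move: hmu' => /andP [/andP [hm1 hm2] hmi].
apply: funext2 => a b; unf; rewrite /tzero.
case hDb: (Dbas j b); last first.
  rewrite /= mul0r addr0.
  rewrite /w0.
  case: (boolP ((a + 1 \in VM_idx g j Mp) && (b == Mp - (a + 1)))) => [/andP [ha /eqP hb]|_]; last by rewrite mulr0.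
  exfalso; move: hDb; rewrite /Dbas.
  move: ha; rewrite mem_VM => /andP [/andP [/andP [_ _] hai] hale].
  have -> : b - j = (mu + halfq g) - (a + 1 + halfq g) + 1 by rewrite hb /Mp; ring.
  rewrite (rpredD (rpredB hmi hai)) ?rpred1 // andbT => h.
  by move/negbT: h; rewrite -ltNge hb; rewrite /Mp in hale *; lra.
case: (boolP (b == Mp - a - 1)) => hb; last first.
  have -> : w0 g j Mp (a + 1) b = 0.
    rewrite /w0 (negbTE (_ : ~~ (b == Mp - (a + 1)))) ?andbF //.
    by apply: contra hb => /eqP ->; apply/eqP; ring.
  have -> : w0 g j Mp a (b + 1) = 0.
    rewrite /w0 (negbTE (_ : ~~ (b + 1 == Mp - a))) ?andbF //.
    by apply: contra hb => /eqP h; apply/eqP; rewrite -h; ring.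
  by rewrite !mulr0 addr0.
move/eqP: hb => hb.
have hale : a + 1 <= mu.
  by move: hDb; rewrite /Dbas hb /Mp => /andP [h _]; lra.
case hFa: (Fbas (halfq g) a); last first.
  by rewrite /= mul0r add0r /w0 mem_VM hFa /= mulr0.
have [k hk ea] := FbasP g a hFa.
have hFa1 : Fbas (halfq g) (a + 1).
  move: hFa => /andP [/andP [h1 h2] hi]; rewrite /Fbas.
  have -> : a + 1 + halfq g = (a + halfq g) + 1 by ring.
  by rewrite rpredD // andbT; apply/andP; split; lra.
have [k1 hk1 ea1] := FbasP g (a + 1) hFa1.
have ek1 : k1 = k.+1.
  apply/eqP; rewrite -(eqr_nat rat) -natr1; apply/eqP.
  have : a + 1 = - halfq g + k1%:R by [].
  rewrite ea; move=> h; have -> : k1%:R = - halfq g + k1%:R + halfq g by ring.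
  by rewrite -h; ring.
rewrite hFa1 DbR //= /w0.
rewrite !mem_VM hFa hFa1 /=.
have -> : a <= Mp - j - 1 by rewrite /Mp; lra.
have -> : a + 1 <= Mp - j - 1 by rewrite /Mp; lra.
have -> : b == Mp - (a + 1) by rewrite hb; apply/eqP; ring.
have -> : b + 1 == Mp - a by rewrite hb; apply/eqP; ring.
rewrite /= (_ : Num.truncn (a + 1 + halfq g) = k.+1); last first.
  by rewrite ea1 truncn_grid.
rewrite (_ : Num.truncn (a + halfq g) = k); last by rewrite ea truncn_grid.
rewrite /=.
have -> : b + 1 = Mp - (- halfq g + k%:R) by rewrite hb ea; ring.
have -> : a + 1 = - halfq g + k%:R + 1 by rewrite ea.
have hne : Gm (halfq g) (- halfq g + k%:R + 1) != 0.
  have hkg : (k < g)%N by rewrite -ltnS -ek1 ltnS.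
  have hkg' : (k%:R + 1 <= g%:R :> rat) by rewrite natr1 ler_nat.
  have h0 : (0 <= k%:R :> rat) by rewrite ler0n.
  have h2 := halfq2 g.
  apply: Gm_neq0; apply/eqP; lra.
by field.
Qed.

Lemma supp_D g j M a : validM g j M -> a \in VM_idx g j M -> Dbas j (M - a).
Proof.
rewrite /validM mem_VM => hv /andP [/andP [_ hai] hale].
rewrite /Dbas; apply/andP; split; first lra.
have -> : M - a - j = (M - (j + 1 - halfq g)) - (a + halfq g) + 1 by ring.
by rewrite (rpredD (rpredB (intr_nat hv) hai)) ?rpred1.
Qed.

Lemma Z_supp g j M w : validM g j M -> suppV g j M w ->
  TJ0 (halfq g) j w = tscale (ratr M) w.
Proof.
move=> hv hs; apply: funext2 => a b; unf.
case: (boolP (w a b == 0)) => [/eqP ->|/hs /andP [ha /eqP hb]]; first by rewrite !mulr0 addr0.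
move: (ha); rewrite mem_VM => /andP [-> _].
rewrite hb (supp_D _ _ _ _ hv ha) /= -mulrDl -rmorphD; congr (ratr _ * _); ring.
Qed.

Lemma valid_Mp g j mu : Fbas (halfq g) mu -> validM g j (j + mu + 1).
Proof.
move=> /andP [/andP [h1 h2] hi]; rewrite /validM.
have -> : j + mu + 1 - (j + 1 - halfq g) = mu + halfq g by ring.
by rewrite natrEint hi /=; lra.
Qed.

Lemma Q_w0 g j mu : Fbas (halfq g) mu ->
  TQ (halfq g) j (w0 g j (j + mu + 1)) = tscale (lam j mu) (w0 g j (j + mu + 1)).
Proof.
move=> hmu.
have hZ := Z_supp _ _ _ _ (valid_Mp g j mu hmu) (w0_supp g j (j + mu + 1)).
rewrite TQE w0_N // P_zero !(Z_add, Z_scale, hZ).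
apply: funext2 => a b; rewrite !(taddE, tscaleE) /tzero /lam.
rewrite !rmorphM !rmorphD !rmorph1; ring.
Qed.

Lemma P_supp g j M w : suppV g j M w -> suppV g j (M + 1) (TJp (halfq g) j w).
Proof.
move=> hs a b; unf; apply: contraNT => hn.
have t2 : w a (b - 1) = 0.
  apply/eqP; apply: contraNT hn => /hs /andP [ha /eqP hb].
  move: ha; rewrite !mem_VM => /andP [-> hale] /=; apply/andP; split; first lra.
  by apply/eqP; rewrite -[b](subrK 1) hb; ring.
have t1 : (if Fbas (halfq g) a && Fbas (halfq g) (a - 1) then Gp (halfq g) (a - 1) else 0)
          * w (a - 1) b = 0.
  case hF: (Fbas (halfq g) a); last by rewrite /= mul0r.
  suff -> : w (a - 1) b = 0 by rewrite mulr0.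
  apply/eqP; apply: contraNT hn => /hs /andP [ha /eqP hb].
  move: ha; rewrite !mem_VM hF => /andP [_ hale] /=; apply/andP; split; first lra.
  by apply/eqP; rewrite hb; ring.
by rewrite t1 t2 mulr0 addr0.
Qed.

Lemma Fbas_bot g : Fbas (halfq g) (- halfq g - 1) = false.
Proof.
rewrite /Fbas (_ : - halfq g <= - halfq g - 1 = false) //.
by apply/negbTE; rewrite -ltNge; lra.
Qed.

Lemma P_bot g j w m : Dbas j m ->
  TJp (halfq g) j w (- halfq g) (m + 1) = Gp j m * w (- halfq g) m.
Proof.
move=> hm; unf; rewrite Fbas_bot andbF mul0r add0r addrK hm DbR //.
Qed.

Lemma Gp_D j m : - (1 / 2) <= j -> Dbas j m -> Gp j m != 0.
Proof.
move=> hj /andP [hm _]; apply: Gp_neq0; apply/eqP; lra.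
Qed.

Lemma it_supp g j mu k :
  suppV g j (j + mu + 1 + k%:R) (iter k (TJp (halfq g) j) (w0 g j (j + mu + 1))).
Proof.
elim: k => [|k IH]; first by rewrite addr0; exact: w0_supp.
by rewrite iterS -natr1 addrA; apply: P_supp.
Qed.

Lemma it_Q g j mu k : Fbas (halfq g) mu ->
  TQ (halfq g) j (iter k (TJp (halfq g) j) (w0 g j (j + mu + 1))) =
  tscale (lam j mu) (iter k (TJp (halfq g) j) (w0 g j (j + mu + 1))).
Proof.
move=> hmu; elim: k => [|k IH]; first exact: Q_w0.
by rewrite iterS QP IH P_scale.
Qed.

Lemma it_bot g j mu k : - (1 / 2) <= j -> Fbas (halfq g) mu ->
  iter k (TJp (halfq g) j) (w0 g j (j + mu + 1)) (- halfq g) (j + mu + 1 + halfq g + k%:R) != 0.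
Proof.
move=> hj hmu; have hmu' := hmu; move: hmu' => /andP [/andP [hm1 hm2] hmi].
elim: k => [|k IH].
  rewrite addr0 /= /w0 mem_VM.
  have -> : Fbas (halfq g) (- halfq g) by apply/FbasP; exists 0%N => //; rewrite addr0.
  have -> : - halfq g <= j + mu + 1 - j - 1 by lra.
  have -> : j + mu + 1 + halfq g == j + mu + 1 - - halfq g by apply/eqP; ring.
  by rewrite /= addNr (_ : Num.truncn (0 : rat) = 0%N) ?oner_neq0 // -(natrK rat 0).
have hD : Dbas j (j + mu + 1 + halfq g + k%:R).
  rewrite /Dbas; have h0 : (0 <= k%:R :> rat) by rewrite ler0n.
  apply/andP; split; first lra.
  have -> : j + mu + 1 + halfq g + k%:R - j = (mu + halfq g) + 1 + k%:R by ring.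
  by rewrite (rpredD (rpredD hmi (rpred1 _))) ?natr_int.
rewrite iterS -natr1 addrA P_bot //.
by apply: mulf_neq0 => //; apply: Gp_D.
Qed.

Definition fvec g j M mu : tvec :=
  iter (Num.truncn (M - j - 1 - mu)) (TJp (halfq g) j) (w0 g j (j + mu + 1)).

Lemma kdef g j M mu : validM g j M -> mu \in VM_idx g j M ->
  j + mu + 1 + (Num.truncn (M - j - 1 - mu))%:R = M.
Proof.
rewrite /validM mem_VM => hv /andP [/andP [_ hi] hle].
have hn : M - j - 1 - mu \is a Num.nat.
  rewrite natrEint; apply/andP; split; last lra.
  have -> : M - j - 1 - mu = (M - (j + 1 - halfq g)) - (mu + halfq g) by ring.
  by rewrite rpredB // intr_nat.
rewrite truncnK //; ring.
Qed.

Lemma fvec_supp g j M mu : validM g j M -> mu \in VM_idx g j M ->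
  suppV g j M (fvec g j M mu).
Proof.
move=> hv hm; have := it_supp g j mu (Num.truncn (M - j - 1 - mu)).
by rewrite (kdef _ _ _ _ hv hm).
Qed.

Lemma fvec_Q g j M mu : mu \in VM_idx g j M ->
  TQ (halfq g) j (fvec g j M mu) = tscale (lam j mu) (fvec g j M mu).
Proof. by rewrite mem_VM => /andP [h _]; apply: it_Q. Qed.

Lemma fvec_bot g j M mu : - (1 / 2) <= j -> validM g j M -> mu \in VM_idx g j M ->
  fvec g j M mu (- halfq g) (M + halfq g) != 0.
Proof.
move=> hj hv hm; have := hm; rewrite mem_VM => /andP [hF _].
have := it_bot g j mu (Num.truncn (M - j - 1 - mu)) hj hF.
have -> : j + mu + 1 + halfq g + (Num.truncn (M - j - 1 - mu))%:R =
   j + mu + 1 + (Num.truncn (M - j - 1 - mu))%:R + halfq g by ring.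
by rewrite (kdef _ _ _ _ hv hm).
Qed.

Lemma lincomb_nil (I : Type) c (F : I -> tvec) : lincomb [::] c F = tzero.
Proof. by apply: funext2 => a b; rewrite /lincomb big_nil. Qed.

Lemma lincomb_cons (I : Type) x t c (F : I -> tvec) :
  lincomb (x :: t) c F = tadd (tscale (c x) (F x)) (lincomb t c F).
Proof. by apply: funext2 => a b; rewrite /lincomb big_cons taddE tscaleE. Qed.

Lemma Q_lincomb gam j (t : seq rat) c F :
  TQ gam j (lincomb t c F) = lincomb t c (fun i => TQ gam j (F i)).
Proof.
elim: t => [|x t IH]; first by rewrite !lincomb_nil Q_zero.
by rewrite !lincomb_cons Q_add Q_scale IH.
Qed.

Lemma indep g j M (t : seq rat) (c : rat -> algC) :
  - (1 / 2) <= j -> validM g j M ->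
  {in VM_idx g j M &, injective (lam j)} ->
  uniq t -> {subset t <= VM_idx g j M} ->
  lincomb t c (fvec g j M) = tzero -> forall mu, mu \in t -> c mu = 0.
Proof.
move=> hj hv hinj; elim: t c => [|x t IH] c //= /andP [hx ht] hsub H.
have hxs : x \in VM_idx g j M by apply: hsub; rewrite mem_head.
have hts : {subset t <= VM_idx g j M} by move=> y hy; apply: hsub; rewrite inE hy orbT.
have HQ := f_equal (TQ (halfq g) j) H; rewrite Q_zero Q_lincomb in HQ.
have Ht : lincomb t (fun nu => c nu * (lam j nu - lam j x)) (fvec g j M) = tzero.
  apply: funext2 => a b.
  have h1 := f_equal (fun f => f a b) H.
  have h2 := f_equal (fun f => f a b) HQ.
  rewrite /lincomb /tzero /= big_cons in h1 h2 *.
  rewrite big_cons fvec_Q // tscaleE in h2.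
  have e : \sum_(i <- t) c i * TQ (halfq g) j (fvec g j M i) a b =
           \sum_(i <- t) c i * (lam j i * fvec g j M i a b).
    by apply: eq_big_seq => i hi; rewrite fvec_Q ?tscaleE //; apply: hts.
  rewrite e in h2.
  have e2 : \sum_(i <- t) c i * (lam j i - lam j x) * fvec g j M i a b =
     \sum_(i <- t) c i * (lam j i * fvec g j M i a b) -
     lam j x * \sum_(i <- t) c i * fvec g j M i a b.
    rewrite mulr_sumr -sumrB; apply: eq_bigr => i _.
    by rewrite mulrBr mulrBl !mulrA [lam j x * c i]mulrC.
  rewrite e2.
  have -> : \sum_(i <- t) c i * (lam j i * fvec g j M i a b) =
            - (c x * (lam j x * fvec g j M x a b)) by apply/eqP; rewrite -addr_eq0 addrC h2.
  have -> : \sum_(i <- t) c i * fvec g j M i a b = - (c x * fvec g j M x a b)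
     by apply/eqP; rewrite -addr_eq0 addrC h1.
  ring.
have ct : forall mu, mu \in t -> c mu = 0.
  move=> mu hmu; have := IH _ ht hts Ht mu hmu.
  move/eqP; rewrite mulf_eq0 => /orP [/eqP //|].
  rewrite subr_eq0 => /eqP /(hinj _ _ (hts _ hmu) hxs) e.
  by move: hx; rewrite -e hmu.
move=> mu; rewrite inE => /orP [/eqP ->|]; last exact: ct.
have h1 := f_equal (fun f => f (- halfq g) (M + halfq g)) H.
rewrite /lincomb /tzero /= big_cons big1_seq ?addr0 in h1; last first.
  by move=> i /andP [_ hi]; rewrite ct // mul0r.
move/eqP: h1; rewrite mulf_eq0 => /orP [/eqP //|].
by move/negP: (fvec_bot _ _ _ _ hj hv hxs).
Qed.

Lemma int_gtm1 (x : rat) : x \is a Num.int -> -1 < x -> 0 <= x.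
Proof.
rewrite intrE => /orP [/natrP [n ->] _|/natrP [n hn] h]; first by rewrite ler0n.
case: n hn => [|n] hn; first by rewrite -(opprK x) hn oppr0.
have : (1 <= n.+1%:R :> rat) by rewrite ler1n.
rewrite -(opprK x) hn in h *; lra.
Qed.

Lemma lam_inj g j M : (2 * j) \is a Num.int -> halfq g - 1 < j ->
  {in VM_idx g j M &, injective (lam j)}.
Proof.
move=> hj2 hjg x y; rewrite !mem_VM => /andP [/andP [/andP [hx1 _] _] _]
  /andP [/andP [/andP [hy1 _] _] _].
rewrite /lam => /oppr_inj /fmorph_inj e.
have h : (x - y) * (2 * j + x + y + 1) = (j + x) * (j + x + 1) - (j + y) * (j + y + 1) by ring.
move: h; rewrite e subrr => /eqP; rewrite mulf_eq0 => /orP [|/eqP h2]; first by rewrite subr_eq0 => /eqP.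
have h2g := halfq2 g.
have hu : 0 <= 2 * j - g%:R + 1.
  apply: int_gtm1; last lra.
  by rewrite rpredD ?rpred1 // rpredB // natr_int.
lra.
Qed.

Definition Amx g j M : 'M[algC]_(size (VM_idx g j M)) :=
  \matrix_(i, k) fvec g j M (nth 0 (VM_idx g j M) i) (nth 0 (VM_idx g j M) k)
       (M - nth 0 (VM_idx g j M) k).

Definition coefOf (s : seq rat) (v : 'rV[algC]_(size s)) (mu : rat) : algC :=
  \sum_(i < size s) (if nth 0 s i == mu then v 0 i else 0).

Lemma coefOf_nth (s : seq rat) v (i : 'I_(size s)) : uniq s -> coefOf s v (nth 0 s i) = v 0 i.
Proof.
move=> us; rewrite /coefOf (bigD1 i) //= eqxx big1 ?addr0 // => k hk.
by rewrite nth_uniq // -[(k : nat) == i]/(k == i) (negbTE hk).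
Qed.

Lemma lincomb_nth (s : seq rat) c (F : rat -> tvec) a b :
  lincomb s c F a b = \sum_(i < size s) c (nth 0 s i) * F (nth 0 s i) a b.
Proof. by rewrite /lincomb (big_nth 0) big_mkord. Qed.

Lemma comb_on g j M v (k : 'I_(size (VM_idx g j M))) :
  lincomb (VM_idx g j M) (coefOf (VM_idx g j M) v) (fvec g j M)
     (nth 0 (VM_idx g j M) k) (M - nth 0 (VM_idx g j M) k) = (v *m Amx g j M) 0 k.
Proof.
rewrite lincomb_nth !mxE; apply: eq_bigr => i _.
by rewrite coefOf_nth ?uniq_VM // mxE.
Qed.

Lemma comb_off g j M c a b : validM g j M ->
  ~~ ((a \in VM_idx g j M) && (b == M - a)) ->
  lincomb (VM_idx g j M) c (fvec g j M) a b = 0.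
Proof.
move=> hv hn; rewrite /lincomb big1_seq // => i /andP [_ hi].
suff -> : fvec g j M i a b = 0 by rewrite mulr0.
by apply/eqP; apply: contraNT hn; apply: fvec_supp.
Qed.

Lemma on_nth (s : seq rat) a : a \in s -> exists k : 'I_(size s), a = nth 0 s k.
Proof.
move=> ha; have hi : (index a s < size s)%N by rewrite index_mem.
by exists (Ordinal hi); rewrite /= nth_index.
Qed.

Lemma A_unit g j M : - (1 / 2) <= j -> validM g j M -> (2 * j) \is a Num.int ->
  halfq g - 1 < j -> Amx g j M \in unitmx.
Proof.
move=> hj hv hj2 hjg; rewrite unitmxE unitfE; apply/negP => /det0P [v hv0 hvA].
have H : lincomb (VM_idx g j M) (coefOf (VM_idx g j M) v) (fvec g j M) = tzero.
  apply: funext2 => a b; rewrite /tzero.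
  case: (boolP ((a \in VM_idx g j M) && (b == M - a))) => [/andP [ha /eqP hb]|hn];
    last exact: comb_off.
  by have [k ek] := on_nth _ _ ha; rewrite hb ek comb_on hvA mxE.
move/eqP: hv0; apply; apply/rowP => i; rewrite mxE -(coefOf_nth _ v i) ?uniq_VM //.
apply: (indep _ _ _ _ _ hj hv (lam_inj g j M hj2 hjg) (uniq_VM g j M) _ H).
  by [].
exact: mem_nth.
Qed.

Definition bw g j M (w : tvec) : 'rV[algC]_(size (VM_idx g j M)) :=
  \row_k w (nth 0 (VM_idx g j M) k) (M - nth 0 (VM_idx g j M) k).
Definition coefM g j M w := coefOf (VM_idx g j M) (bw g j M w *m invmx (Amx g j M)).

Lemma span g j M w : - (1 / 2) <= j -> validM g j M -> (2 * j) \is a Num.int ->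
  halfq g - 1 < j -> suppV g j M w ->
  lincomb (VM_idx g j M) (coefM g j M w) (fvec g j M) = w.
Proof.
move=> hj hv hj2 hjg hs; apply: funext2 => a b.
case: (boolP ((a \in VM_idx g j M) && (b == M - a))) => [/andP [ha /eqP hb]|hn].
  have [k ek] := on_nth _ _ ha; rewrite hb ek /coefM comb_on mulmxKV ?A_unit //.
  by rewrite mxE.
rewrite comb_off //; apply/esym/eqP; apply: contraNT hn; exact: hs.
Qed.

Lemma valid_of g j a b : Fbas (halfq g) a -> Dbas j b -> validM g j (a + b).
Proof.
move=> /andP [/andP [h1 _] ha] /andP [h2 hb]; rewrite /validM natrEint.
have -> : a + b - (j + 1 - halfq g) = (a + halfq g) + (b - j) - 1 by ring.
rewrite (rpredB (rpredD ha hb)) ?rpred1 //=; lra.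
Qed.

Lemma suppM g j (w : tvec) M :
  (forall a b, w a b != 0 -> Fbas (halfq g) a && Dbas j b) ->
  suppV g j M (fun a b => if a + b == M then w a b else 0).
Proof.
move=> hw a b; case: ifP => [/eqP e|_]; last by rewrite eqxx.
move=> /(hw a b) /andP [ha /andP [hb _]].
rewrite mem_VM ha /= -e; apply/andP; split; first lra.
by apply/eqP; ring.
Qed.

Lemma fvec_zero_off g j M mu a b : validM g j M -> mu \in VM_idx g j M ->
  a + b != M -> fvec g j M mu a b = 0.
Proof.
move=> hv hm hn; apply/eqP; apply: contraNT hn => /(fvec_supp _ _ _ _ hv hm) /andP [_ /eqP ->].
by apply/eqP; ring.
Qed.

Theorem mainTheorem5 (g : nat) (j : rat) :
  (0 < g)%N -> - (1 / 2) <= j -> (2 * j) \is a Num.int -> halfq g - 1 < j ->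
  (* on each V_M: a basis of Q-eigenvectors with the claimed, pairwise distinct, eigenvalues *)
  (forall M : rat, validM g j M ->
     exists f : rat -> tvec,
       [/\ forall mu, mu \in VM_idx g j M ->
              in_VM g j M (f mu) /\ TQ (halfq g) j (f mu) = tscale (lam j mu) (f mu),
           {in VM_idx g j M &, injective (lam j)},
           forall c : rat -> algC, lincomb (VM_idx g j M) c f = tzero ->
              forall mu, mu \in VM_idx g j M -> c mu = 0
         & forall w, in_VM g j M w ->
              exists c : rat -> algC, w = lincomb (VM_idx g j M) c f]) /\
  (* Q is diagonalisable on F_gam (x) D^+_j : a basis of Q-eigenvectors *)
  (exists E : rat * rat -> tvec,
     [/\ forall i, validM g j i.1 -> i.2 \in VM_idx g j i.1 ->
            in_tensor (halfq g) j (E i) /\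
            exists l : algC, TQ (halfq g) j (E i) = tscale l (E i),
         forall (s : seq (rat * rat)) (c : rat * rat -> algC),
            uniq s -> all (fun i => validM g j i.1 && (i.2 \in VM_idx g j i.1)) s ->
            lincomb s c E = tzero -> forall i, i \in s -> c i = 0
       & forall w, in_tensor (halfq g) j w ->
            exists (s : seq (rat * rat)) (c : rat * rat -> algC),
              all (fun i => validM g j i.1 && (i.2 \in VM_idx g j i.1)) s /\
              w = lincomb s c E]).
Proof.
move=> hg hj hj2 hjg; split.
  move=> M hv; exists (fvec g j M); split.
  - move=> mu hmu; split; last exact: fvec_Q.
    by apply: supp_inVM; apply: fvec_supp.
  - exact: lam_inj.
  - move=> c H mu hmu.
    exact: (indep _ _ _ _ _ hj hv (lam_inj g j M hj2 hjg) (uniq_VM g j M) (fun x h => h) H).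
  - move=> w /inVM_supp hs; exists (coefM g j M w); by rewrite span.
exists (fun i => fvec g j i.1 i.2); split.
- move=> [M mu] /= hv hmu; split; last by exists (lam j mu); apply: fvec_Q.
  split.
    move=> a b /(fvec_supp _ _ _ _ hv hmu) /andP [ha /eqP hb].
    rewrite hb (supp_D _ _ _ _ hv ha) andbT.
    by move: ha; rewrite mem_VM => /andP [].
  exists [seq (x, M - x) | x <- VM_idx g j M] => a b.
  move=> /(fvec_supp _ _ _ _ hv hmu) /andP [ha /eqP hb].
  by rewrite hb; apply/mapP; exists a.
- move=> s c us hall H i his.
  have /andP [hv hmu] := allP hall i his.
  set M := i.1.
  set t := [seq x.2 | x <- s & x.1 == M].
  have ut : uniq t.
    rewrite map_inj_in_uniq ?filter_uniq //.
    move=> [x1 x2] [y1 y2]; rewrite !mem_filter /= => /andP [/eqP -> _] /andP [/eqP -> _].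
    by move=> ->.
  have hts : {subset t <= VM_idx g j M}.
    move=> x /mapP [[y1 y2]]; rewrite mem_filter /= => /andP [/eqP e hy] ->.
    by have /andP [_] := allP hall _ hy; rewrite /= e.
  have Ht : lincomb t (fun mu => c (M, mu)) (fvec g j M) = tzero.
    apply: funext2 => a b; rewrite /tzero.
    case: (boolP (a + b == M)) => hab; last first.
      rewrite /lincomb big1_seq // => x /andP [_ hx].
      by rewrite fvec_zero_off ?mulr0 //; apply: hts.
    have e1 : lincomb t (fun mu => c (M, mu)) (fvec g j M) a b =
              \sum_(x <- s | x.1 == M) c x * fvec g j x.1 x.2 a b.
      rewrite /lincomb big_map big_filter; apply: eq_bigr => [[x1 x2]] /= /eqP ->.
      by [].
    rewrite e1 big_mkcond /=.
    have h0 := f_equal (fun f => f a b) H; rewrite /lincomb /tzero /= in h0.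
    rewrite -[X in _ = X]h0; apply: eq_big_seq => x hx; case: ifP => // hn.
    have /andP [hvx hmx] := allP hall x hx.
    rewrite fvec_zero_off ?mulr0 //.
    by apply: contraFN hn => /eqP <-; apply/eqP; move/eqP: hab.
  have hi2 : i.2 \in t by apply/mapP; exists i => //; rewrite mem_filter eqxx.
  have := indep _ _ _ _ _ hj hv (lam_inj g j M hj2 hjg) ut hts Ht i.2 hi2.
  by rewrite /M -surjective_pairing.
- move=> w [hw [s0 hs0]].
  set Ms := undup [seq x.1 + x.2 | x <- s0 & Fbas (halfq g) x.1 && Dbas j x.2].
  have hMs : forall M, M \in Ms -> validM g j M.
    move=> M; rewrite mem_undup => /mapP [[x1 x2]]; rewrite mem_filter /= => /andP [/andP [h1 h2] _] ->.
    exact: valid_of.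
  set wM := fun M a b => if a + b == M then w a b else 0.
  exists (flatten [seq [seq (M, mu) | mu <- VM_idx g j M] | M <- Ms]).
  exists (fun x => coefM g j x.1 (wM x.1) x.2); split.
    apply/allP => x /flattenP [r /mapP [M hM ->]] /mapP [mu hmu ->] /=.
    by rewrite hMs.
  apply: funext2 => a b; rewrite /lincomb big_flatten big_map /=.
  have e : \sum_(M <- Ms) \sum_(i <- [seq (M, mu) | mu <- VM_idx g j M])
       coefM g j i.1 (wM i.1) i.2 * fvec g j i.1 i.2 a b = \sum_(M <- Ms) wM M a b.
    apply: eq_big_seq => M hM; rewrite big_map /=.
    have := span g j M (wM M) hj (hMs M hM) hj2 hjg (suppM g j w M hw).
    by move=> /(f_equal (fun f => f a b)); rewrite /lincomb.
  rewrite e /wM.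
  case: (boolP (w a b == 0)) => [/eqP ->|hn].
    by rewrite big1 // => M _; case: ifP.
  have hab : a + b \in Ms.
    rewrite mem_undup; apply/mapP; exists (a, b) => //.
    by rewrite mem_filter hw // hs0.
  rewrite (big_rem (a + b)) //= eqxx big1_seq ?addr0 // => M /andP [_ hM].
  case: eqP => // e2; move: hM; rewrite -e2 mem_rem_uniqF //.
  exact: undup_uniq.
Qed.
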